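(* Let $\mathcal{L}$ and $\mathcal{L}'$ be lattices and let $l,l':\mathbb{N}\to\mathbb{N}$ be strictly positive functions. If $\mathcal{L}$ is $\Omega(l(n))$ and $\mathcal{L}'$ is $\Omega(l'(n))$, then the product lattice $\mathcal{L}\times\mathcal{L}'$ is $\Omega\big(l(\lfloor n/2\rfloor)\,l'(\lfloor n/2\rfloor)\big)$.
   Context: A lattice means a partially ordered set $(\mathcal{L},\sqsubseteq)$ with least element $\bot$ in which any two elements have a least upper bound $\sqcup$; $\bigsqcup S$ denotes the least upper bound of a finite set ($\bigsqcup\emptyset=\bot$). The product lattice $\mathcal{L}\times\mathcal{L}'$ has pairs ordered componentwise. The closure set of a finite $S$ is $C(S)=\{\bigsqcup S' : S'\subseteq S\}$ and $CS_{\mathcal{L}}(n)=\max\{|C(S)| : S\subseteq\mathcal{L}\text{ finite}, |S|\le n\}$. For $f,g:\mathbb{N}\to\mathbb{N}$, $f$ is $\Omega(g)$ iff there exist $N_0\in\mathbb{N}$ and rational $C>0$ with $f(n)\ge Cg(n)$ for all $n\ge N_0$. A lattice $\mathcal{L}$ is $\Omega(f(n))$ iff $CS_{\mathcal{L}}(n)$ is $\Omega(f(n))$. *)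

(* Defs.v *)
From HB Require Import structures.
From mathcomp Require Import all_boot all_order all_algebra.
From mathcomp Require Import finmap.
From mathcomp Require Import boolp.
Set Implicit Arguments. Unset Strict Implicit. Unset Printing Implicit Defensive.
Import Order.TTheory GRing.Theory Num.Theory.
Local Open Scope order_scope.
Local Open Scope fset_scope.

(* A "lattice" in the sense of the paper: a partial order with a least element
   in which any two elements have a least upper bound, i.e. a
   bJoinSemilatticeType. *)

Section Closure.
Context {disp : Order.disp_t} {L : bJoinSemilatticeType disp}.

Definition bigjoin (S : {fset L}) : L := \join_(x <- S) x.

Definition closure_set (S : {fset L}) : {fset L} :=
  [fset bigjoin S' | S' in fpowerset S].

Definition CS_val (n m : nat) : Prop :=
  exists S : {fset L}, (#|` S| <= n)%N /\ #|` closure_set S| = m.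

Lemma CS_val_ex n : exists m, `[< CS_val n m >].
Proof. exists 1%N; apply/asboolP; exists fset0; split => //.
rewrite /closure_set.
have -> : fpowerset (fset0 : {fset L}) = [fset fset0].
  apply/fsetP => B; rewrite fpowersetE inE fsubset0; by [].
apply/eqP/cardfs1P; exists (bigjoin fset0); apply/fsetP=> y.
rewrite inE; apply/imfsetP/eqP => [[B] |->]; first by rewrite inE => /eqP ->.
by exists fset0; rewrite ?inE.
Qed.

Lemma card_closure_le S : (#|` closure_set S| <= 2 ^ #|` S|)%N.
Proof.
apply: leq_trans (leq_imfset_card _ _ _) _.
by rewrite card_fpowerset.
Qed.

Lemma CS_val_bound n m : `[< CS_val n m >] -> (m <= 2 ^ n)%N.
Proof. move/asboolP=> [S [hS <-]].
apply: leq_trans (card_closure_le S) _.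
by rewrite leq_pexp2l.
Qed.

Definition CS (n : nat) : nat := ex_maxn (CS_val_ex n) (@CS_val_bound n).

End Closure.
Arguments CS {disp} L n.

Definition bigOmega (f g : nat -> nat) : Prop :=
  exists (N0 : nat) (C : rat), (0 < C)%R /\
    forall n, (N0 <= n)%N -> (C * (g n)%:R <= (f n)%:R)%R.

Definition lattice_Omega {disp : Order.disp_t} (L : bJoinSemilatticeType disp)
  (f : nat -> nat) : Prop := bigOmega (CS L) f.

(* Main.v *)
Require Import Defs.
From HB Require Import structures.
From mathcomp Require Import all_boot all_order all_algebra.
From mathcomp Require Import finmap boolp.
Import Order.TTheory GRing.Theory Num.Theory.
Local Open Scope order_scope.
Local Open Scope fset_scope.

Lemma CS_ge d (L : bJoinSemilatticeType d) n m : CS_val (L:=L) n m -> (m <= CS L n)%N.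
Proof. rewrite /CS; case: ex_maxnP => i _ H h; apply: H; exact/asboolP. Qed.

Lemma CS_attained d (L : bJoinSemilatticeType d) n : CS_val (L:=L) n (CS L n).
Proof. rewrite /CS; case: ex_maxnP => i /asboolP //. Qed.

Lemma bigjoinP d (L : bJoinSemilatticeType d) (S : {fset L}) y :
  reflect (forall x, x \in S -> x <= y) (bigjoin S <= y).
Proof.
apply: (iffP (joinsP_seq _ _ _ _)) => H x xS; first exact: H.
by move=> _; apply: H.
Qed.

Lemma bigjoin_sup d (L : bJoinSemilatticeType d) (S : {fset L}) x :
  x \in S -> x <= bigjoin S.
Proof. by move=> xS; exact: (@joins_sup_seq _ _ _ _ predT id x). Qed.

Section Prod.
Variables (d1 d2 : Order.disp_t)
  (L1 : bJoinSemilatticeType d1) (L2 : bJoinSemilatticeType d2).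
Definition f1 (a : L1) : (L1 *p L2)%type := (a, \bot).
Definition f2 (b : L2) : (L1 *p L2)%type := (\bot, b).

Lemma bigjoin_prod (A1 : {fset L1}) (A2 : {fset L2}) :
  bigjoin (f1 @` A1 `|` f2 @` A2) = (bigjoin A1, bigjoin A2) :> (L1 *p L2)%type.
Proof.
apply: le_anti; apply/andP; split.
  apply/bigjoinP => x /fsetUP [] /imfsetP [y /= yA ->]; rewrite leEprod /=.
    by apply/andP; split; [apply: bigjoin_sup | apply: le0x].
  by apply/andP; split; [apply: le0x | apply: bigjoin_sup].
rewrite leEprod /=; apply/andP; split; apply/bigjoinP => y yA.
  have : f1 y <= bigjoin (f1 @` A1 `|` f2 @` A2).
    by apply: bigjoin_sup; rewrite in_fsetU in_imfset.
  by rewrite leEprod => /andP [].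
have : f2 y <= bigjoin (f1 @` A1 `|` f2 @` A2).
  by apply: bigjoin_sup; rewrite in_fsetU orbC in_imfset.
by rewrite leEprod => /andP [].
Qed.

Lemma CS_prod k : (CS L1 k * CS L2 k <= CS (L1 *p L2)%type k.*2)%N.
Proof.
have [S1 [hS1 e1]] := @CS_attained _ L1 k.
have [S2 [hS2 e2]] := @CS_attained _ L2 k.
set S := f1 @` S1 `|` f2 @` S2.
apply: (@leq_trans #|` closure_set S|); last first.
  apply: CS_ge; exists S; split => //.
  apply: leq_trans (leq_card_fsetU _ _).1 _.
  rewrite -addnn leq_add //.
    by rewrite card_imfset // => a b [].
  by rewrite card_imfset // => a b [].
rewrite -e1 -e2.
have mem : forall (a : closure_set S1) (b : closure_set S2),
   ((val a, val b) : (L1 *p L2)%type) \in closure_set S.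
  move=> [a ha] [b hb] /=.
  case/imfsetP: ha => A1 /= hA1 ->; case/imfsetP: hb => A2 /= hA2 ->.
  rewrite -bigjoin_prod; apply/imfsetP; exists (f1 @` A1 `|` f2 @` A2) => //.
  suff: (f1 @` A1 `|` f2 @` A2) \in fpowerset S by []. have {}hA1 : A1 `<=` S1 by rewrite -fpowersetE; exact: hA1. have {}hA2 : A2 `<=` S2 by rewrite -fpowersetE; exact: hA2. rewrite fpowersetE.
  apply/fsubsetP => x /fsetUP [] /imfsetP [y /= yA ->]; rewrite in_fsetU.
    by rewrite in_imfset //; move/fsubsetP: hA1; apply.
  by rewrite orbC in_imfset //; move/fsubsetP: hA2; apply.
pose h (p : (closure_set S1 * closure_set S2)%type) : closure_set S :=
  [` mem p.1 p.2].
have hinj : injective h.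
  move=> [a b] [a' b'] /(congr1 val) /= [] /val_inj -> /val_inj -> //.
have := leq_card _ hinj.
by rewrite card_prod -!cardfE.
Qed.
End Prod.

Lemma CS_mono d (L : bJoinSemilatticeType d) m n : (m <= n)%N -> (CS L m <= CS L n)%N.
Proof.
move=> mn; have [S [hS e]] := @CS_attained _ L m.
apply: CS_ge; exists S; split => //; exact: leq_trans mn.
Qed.

Theorem mainTheorem4 (d1 d2 : Order.disp_t)
  (L1 : bJoinSemilatticeType d1) (L2 : bJoinSemilatticeType d2)
  (l l' : nat -> nat)
  (hl : forall n, (0 < l n)%N) (hl' : forall n, (0 < l' n)%N) :
  lattice_Omega L1 l -> lattice_Omega L2 l' ->
  lattice_Omega (L1 *p L2)%type (fun n => (l n./2 * l' n./2)%N).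
Proof.
move=> [N1 [C1 [C1p H1]]] [N2 [C2 [C2p H2]]].
exists (maxn N1 N2).*2, (C1 * C2)%R; split; first exact: mulr_gt0.
move=> n hn.
have hk : (maxn N1 N2 <= n./2)%N.
  by rewrite -(doubleK (maxn N1 N2)); exact: half_leq.
have k1 : (N1 <= n./2)%N by apply: leq_trans hk; apply: leq_maxl.
have k2 : (N2 <= n./2)%N by apply: leq_trans hk; apply: leq_maxr.
have hle : (CS L1 n./2 * CS L2 n./2 <= CS (L1 *p L2)%type n)%N.
  apply: leq_trans (@CS_prod _ _ L1 L2 n./2) _; apply: CS_mono.
  by rewrite -{2}(odd_double_half n) leq_addl.
apply: (@Order.POrderTheory.le_trans _ _ ((CS L1 n./2 * CS L2 n./2)%:R : rat)%R); last by rewrite ler_nat.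
rewrite !natrM mulrACA; apply: ler_pM => //; rewrite ?mulr_ge0 ?ler0n ?(ltW C1p) ?(ltW C2p) //; [exact: H1 | exact: H2]. Qed.
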